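(* If $\mathcal{G}_1=([n],\mathcal{E}_1)$ and $\mathcal{G}_2=([n],\mathcal{E}_2)$ are simple plurigraphs with $Y_{\mathcal{G}_1}=Y_{\mathcal{G}_2}$, then $\mathcal{E}_1=\mathcal{E}_2$; that is, a simple plurigraph $\mathcal{G}$ can be reconstructed from $Y_{\mathcal{G}}$.
   Context: A graph $(V,E)$ has $E$ a multiset of unordered pairs of (not necessarily distinct) vertices. A plurigraph $\mathcal{G}=(V,\mathcal{E})$ has $\mathcal{E}$ a finite multiset of graphs $(V,E)$ on the vertex set $V$ with $E\neq\emptyset$. A proper coloring is $f:V\to\mathbb{P}=\{1,2,\dots\}$ such that every $(V,E)\in\mathcal{E}$ contains an edge $uv$ with $f(u)\ne f(v)$; for $V=[n]$, $Y_{\mathcal{G}}=\sum_f y_{f(1)}\cdots y_{f(n)}$ over proper colorings, in noncommuting variables $y_1,y_2,\dots$. For graphs $G_1,G_2$ on $V$, $G_1\prec G_2$ means every connected component of $G_1$ is contained in some connected component of $G_2$. $\mathcal{G}$ is a simple plurigraph if (i) for each $G\in\mathcal{E}$, every connected component of $G$ is a (simple, loopless) complete graph, and (ii) there do not exist two distinct members $G_1\ne G_2$ of $\mathcal{E}$ with $G_1\prec G_2$ (so in particular no pluriedge occurs twice). *)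

(* Defs.v *)
From mathcomp Require Import all_boot.
Set Implicit Arguments. Unset Strict Implicit. Unset Printing Implicit Defensive.

(* A graph on vertex set [n] = 'I_n: its edge multiset, given as the
   multiplicity of each unordered pair {u,v}, encoded as the set [set u; v]
   (a loop uu is the singleton [set u]). *)
Definition graph (n : nat) := {ffun {set 'I_n} -> nat}.

Definition is_graph n (G : graph n) : Prop :=
  forall e : {set 'I_n}, 0 < G e -> (0 < #|e|) && (#|e| <= 2).

(* a plurigraph on [n]: finite multiset (a seq, up to permutation) of graphs
   on [n], each with nonempty edge multiset *)
Definition plurigraph n := seq (graph n).

Definition is_plurigraph n (E : plurigraph n) : Prop :=
  forall G, G \in E -> is_graph G /\ exists e, 0 < G e.

Definition adj n (G : graph n) : rel 'I_n := fun u v => 0 < G [set u; v].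
Definition component n (G : graph n) (u : 'I_n) : {set 'I_n} :=
  [set v | connect (adj G) u v].

Definition prec n (G1 G2 : graph n) : Prop :=
  forall u, exists w, component G1 u \subset component G2 w.

(* every connected component of G is a simple loopless complete graph:
   each edge multiplicity is 1 exactly on pairs of distinct vertices lying
   in a common component, and 0 otherwise *)
Definition complete_components n (G : graph n) : Prop :=
  forall e : {set 'I_n},
    G e = ((#|e| == 2) && [forall u in e, forall v in e, connect (adj G) u v]) :> nat.

(* simple plurigraph; "distinct members" = distinct occurrences in the multiset *)
Definition simple_plurigraph n (E : plurigraph n) : Prop :=
  is_plurigraph E /\
  (forall G, G \in E -> complete_components G) /\
  (forall i j, i < size E -> j < size E -> i <> j ->
     ~ prec (nth [ffun => 0] E i) (nth [ffun => 0] E j)).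

Definition proper n (E : plurigraph n) (f : 'I_n -> nat) : bool :=
  all (fun G : graph n =>
         [exists e : {set 'I_n},
            (0 < G e) && [exists u in e, exists v in e, f u != f v]]) E.

(* Y_G, a formal series in noncommuting variables y_1, y_2, ...; represented
   by its coefficient function on words (monomials y_{w_1} ... y_{w_k}).
   The word y_{f(1)}...y_{f(n)} determines f, so the coefficient of a word w
   is 1 if w has length n, positive letters and f(i) := w_i is proper, else 0. *)
Definition Y n (E : plurigraph n) : seq nat -> nat := fun w =>
  ((size w == n) && all (fun c => 0 < c) w &&
   proper E (fun i : 'I_n => nth 0 w i)) : nat.

(* Main.v *)
Require Import Defs.
From mathcomp Require Import all_boot.
Set Implicit Arguments. Unset Strict Implicit. Unset Printing Implicit Defensive.

Section S.
Variable n : nat.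
Implicit Types (G H : graph n) (E : plurigraph n).

Lemma proper_ext E f g : f =1 g -> Defs.proper E f = Defs.proper E g.
Proof.
move=> fg; apply: eq_all => G; apply: eq_existsb => e; congr (_ && _).
apply: eq_existsb => u; rewrite fg; congr (_ && _).
by apply: eq_existsb => v; rewrite fg.
Qed.

Lemma Y_map E f : (forall i, 0 < f i) ->
  Y E [seq f i | i <- enum 'I_n] = Defs.proper E f :> nat.
Proof.
move=> fp; rewrite /Y size_map size_enum_ord eqxx /=.
have -> : all (fun c => 0 < c) [seq f i | i <- enum 'I_n].
  by rewrite all_map; apply/allP => i _ /=.
rewrite /= (@proper_ext E _ f) // => i.
by rewrite (nth_map i) ?size_enum_ord ?ltn_ord // nth_ord_enum.
Qed.

Lemma adj_sym G : symmetric (adj G).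
Proof. by move=> u v; rewrite /adj setUC. Qed.

Definition C G := connect (adj G).

Lemma C_sym G : connect_sym (adj G).
Proof. exact: sym_connect_sym (@adj_sym G). Qed.

Definition fG G (i : 'I_n) := (nat_of_ord (root (adj G) i)).+1.

Lemma fG_eq G u v : (fG G u == fG G v) = C G u v.
Proof. by rewrite /fG eqSS /C -(root_connect (@C_sym G)) val_eqE. Qed.

Definition bad G (f : 'I_n -> nat) :=
  [exists e : {set 'I_n},
     (0 < G e) && [exists u in e, exists v in e, f u != f v]].

Lemma badP G f : complete_components G ->
  bad G f = ~~ [forall u, forall v, C G u v ==> (f u == f v)].
Proof.
move=> cc; apply/idP/idP.
  case/existsP=> e /andP [Ge /existsP [u /andP [ue /existsP [v /andP [ve fuv]]]]].
  apply/negP => /forallP /(_ u) /forallP /(_ v) /implyP H.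
  move: Ge; rewrite cc lt0b; case/andP => _ /forallP /(_ u) /implyP /(_ ue).
  by move/forallP/(_ v)/implyP/(_ ve) => /H; rewrite (negbTE fuv).
apply: contraR => nb; apply/forallP => u; apply/forallP => v; apply/implyP.
case/connectP => p; elim: p u => [|x p IH] u /=; first by move=> _ ->.
case/andP => ux px vl; have := IH x px vl.
suff -> : f u = f x by [].
apply/eqP; apply: contraR nb => nfx; apply/existsP; exists [set u; x].
rewrite -/(adj G u x) ux /=; apply/existsP; exists u; rewrite !inE eqxx /=.
by apply/existsP; exists x; rewrite !inE eqxx orbT.
Qed.

Definition le G H := forall u v, C G u v -> C H u v.

Lemma proper_fG E H : (forall G, G \in E -> complete_components G) ->
  Defs.proper E (fG H) = false <-> exists2 G, G \in E & le G H.
Proof.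
move=> ccE; rewrite /Defs.proper; split.
  move/negbT; rewrite -has_predC => /hasP [G GE] /=.
  rewrite -/(bad G (fG H)) (badP _ (ccE _ GE)) negbK => /forallP Hf.
  exists G => // u v cuv; rewrite -fG_eq.
  by have /forallP /(_ v) /implyP := Hf u; apply.
case=> G GE leGH; apply/negbTE; rewrite -has_predC; apply/hasP; exists G => //=.
rewrite -/(bad G (fG H)) (badP _ (ccE _ GE)) negbK.
by apply/forallP => u; apply/forallP => v; apply/implyP => /leGH; rewrite fG_eq.
Qed.

Lemma le_prec G H : le G H -> prec G H.
Proof.
move=> l u; exists u; apply/subsetP => v; rewrite !inE; exact: l.
Qed.

Lemma le_antisym G H : complete_components G -> complete_components H ->
  le G H -> le H G -> G = H.
Proof.
move=> cG cH l1 l2; apply/ffunP => e; rewrite cG cH; congr (nat_of_bool (_ && _)).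
apply: eq_forallb => u; congr (_ ==> _).
apply: eq_forallb => v; congr (_ ==> _); apply/idP/idP; [exact: l1|exact: l2].
Qed.

Lemma simple_uniq E : simple_plurigraph E -> uniq E.
Proof.
case=> _ [_ ac]; case: (boolP (uniq E)) => // /(uniqPn [ffun => 0]).
case=> i [j [ij jE eq]].
exfalso; apply: (ac i j _ jE).
- exact: ltn_trans ij jE.
- by move=> e; rewrite e ltnn in ij.
- by rewrite eq; apply: le_prec => u v h.
Qed.

Lemma Yproper E1 E2 : Y E1 = Y E2 ->
  forall f, (forall i, 0 < f i) -> Defs.proper E1 f = Defs.proper E2 f.
Proof.
move=> eY f fp; have := congr1 (fun F => F [seq f i | i <- enum 'I_n]) eY.
by rewrite /= !Y_map //; case: (Defs.proper E1 f); case: (Defs.proper E2 f).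
Qed.

Lemma mem_sub E1 E2 : simple_plurigraph E1 -> simple_plurigraph E2 ->
  (forall f, (forall i, 0 < f i) -> Defs.proper E1 f = Defs.proper E2 f) ->
  {subset E1 <= E2}.
Proof.
move=> [_ [cc1 ac1]] [_ [cc2 _]] eP G GE1.
have: Defs.proper E1 (fG G) = false.
  by apply/(proper_fG _ cc1); exists G => // u v h.
rewrite eP // => /(proper_fG _ cc2) [H HE2 lHG].
have: Defs.proper E2 (fG H) = false.
  by apply/(proper_fG _ cc2); exists H => // u v h.
rewrite -eP // => /(proper_fG _ cc1) [G' G'E1 lG'H].
have lG'G : le G' G := fun u v h => lHG _ _ (lG'H _ _ h).
have eG' : G' = G.
  case: (eqVneq (index G' E1) (index G E1)) => [ei|nei].
    by rewrite -(nth_index [ffun => 0] G'E1) ei nth_index.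
  exfalso; apply: (ac1 _ _ _ _ (elimN eqP nei)); rewrite ?index_mem //.
  by rewrite !nth_index //; apply: le_prec.
subst G'.
have -> : G = H by apply: le_antisym; auto.
exact: HE2.
Qed.

End S.

Theorem proposition4p1 (n : nat) (E1 E2 : plurigraph n) :
  simple_plurigraph E1 -> simple_plurigraph E2 ->
  Y E1 = Y E2 -> perm_eq E1 E2.
Proof.
move=> s1 s2 eY; apply: uniq_perm; try exact: simple_uniq.
move=> G; apply/idP/idP; apply: mem_sub => //; first exact: Yproper.
by move=> f fp; symmetry; apply: Yproper.
Qed.
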